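(* Let $R$ be a reduced root system and let $W$ be its Weyl group. Let $(t_1,\ldots,t_n)$ be an $n$-tuple of reflections in $W$ with $t_1t_2\cdots t_n=1$. Then $n$ is even and $(t_1,\ldots,t_n)$ is braid-equivalent to an $n$-tuple $(t'_1,\ldots,t'_n)$ of reflections with $t'_1\cdots t'_n=1$ and $t'_{2i-1}=t'_{2i}$ for $i=1,\ldots,n/2$.
   Context: For a group $G$, an elementary transformation (braid move) of an $n$-tuple $(t_1,\ldots,t_n)\in G^n$ is, for some $1\leq i\leq n-1$, either the replacement of $(t_i,t_{i+1})$ by $(t_it_{i+1}t_i^{-1},t_i)$ or by $(t_{i+1},t_{i+1}^{-1}t_it_{i+1})$, leaving the other entries unchanged. Two $n$-tuples are braid-equivalent if one is obtained from the other by a finite sequence of elementary transformations. *)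

(* Defs.v *)
From Stdlib Require Import Relation_Operators.
From HB Require Import structures.
From mathcomp Require Import all_boot all_order all_algebra.
From mathcomp Require Import reals.
Set Implicit Arguments. Unset Strict Implicit. Unset Printing Implicit Defensive.
Import Order.TTheory GRing.Theory Num.Theory.
Local Open Scope ring_scope.

Definition dotv (R : realType) (d : nat) (u v : 'rV[R]_d) : R := (u *m v^T) 0 0.

(* Matrix of the orthogonal reflection s_a (vectors act on the right:
   v *m refl a = v - (2 (v,a)/(a,a)) a). *)
Definition refl (R : realType) (d : nat) (a : 'rV[R]_d) : 'M[R]_d :=
  1%:M - (2 / dotv a a) *: (a^T *m a).

(* Reduced (crystallographic) root system in V, in the sense of Bourbaki:
   a finite set of nonzero vectors spanning V, stable under its reflections,
   with integral Cartan numbers, and reduced. *)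
Definition reduced_root_system (R : realType) (d : nat) (Rs : seq 'rV[R]_d) : Prop :=
  [/\ (0 : 'rV[R]_d) \notin Rs,
      \rank (\matrix_(i < size Rs) nth 0 Rs i) = d,
      (forall a b, a \in Rs -> b \in Rs -> b *m refl a \in Rs),
      (forall a b, a \in Rs -> b \in Rs ->
          exists z : int, 2 * dotv a b / dotv a a = z%:~R) &
      (forall a (c : R), a \in Rs -> c *: a \in Rs -> c = 1 \/ c = -1)].

Definition is_reflection (R : realType) (d : nat) (Rs : seq 'rV[R]_d)
  (t : 'M[R]_d) : Prop := exists2 a, a \in Rs & t = refl a.

Definition prodmx (R : realType) (d : nat) (s : seq 'M[R]_d) : 'M[R]_d :=
  foldr (fun x y => x *m y) 1%:M s.

Definition braid_step (R : realType) (d : nat) (s s' : seq 'M[R]_d) : Prop :=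
  exists (l r : seq 'M[R]_d) (x y : 'M[R]_d),
    s = l ++ x :: y :: r /\
    (s' = l ++ (x *m y *m invmx x) :: x :: r \/
     s' = l ++ y :: (invmx y *m x *m y) :: r).

Definition braid_equiv (R : realType) (d : nat) : seq 'M[R]_d -> seq 'M[R]_d -> Prop :=
  clos_refl_trans _ (@braid_step R d).

(* Main.v *)
Require Import Defs.
From Stdlib Require Import Relation_Operators Classical.
From HB Require Import structures.
From mathcomp Require Import all_boot all_order all_algebra.
From mathcomp Require Import reals.
From mathcomp Require Import ring lra.
Import Order.TTheory GRing.Theory Num.Theory.
Local Open Scope ring_scope.
Set Implicit Arguments. Unset Strict Implicit.



Lemma dotvE (R : realType) (d : nat) (u w : 'rV[R]_d) :
  dotv u w = \sum_i u 0 i * w 0 i.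
Proof. by rewrite /dotv !mxE; apply: eq_bigr => i _; rewrite mxE. Qed.

Lemma dotvC (R : realType) (d : nat) (u w : 'rV[R]_d) : dotv u w = dotv w u.
Proof. by rewrite !dotvE; apply: eq_bigr => i _; rewrite mulrC. Qed.

Lemma dotvDl (R : realType) (d : nat) (u u' w : 'rV[R]_d) :
  dotv (u + u') w = dotv u w + dotv u' w.
Proof. by rewrite !dotvE -big_split; apply: eq_bigr => i _; rewrite mxE mulrDl. Qed.

Lemma dotvZl (R : realType) (d : nat) k (u w : 'rV[R]_d) :
  dotv (k *: u) w = k * dotv u w.
Proof. by rewrite !dotvE mulr_sumr; apply: eq_bigr => i _; rewrite mxE mulrA. Qed.

Lemma dotvNl (R : realType) (d : nat) (u w : 'rV[R]_d) :
  dotv (- u) w = - dotv u w.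
Proof. by rewrite -scaleN1r dotvZl mulN1r. Qed.

Lemma dotvBl (R : realType) (d : nat) (u u' w : 'rV[R]_d) :
  dotv (u - u') w = dotv u w - dotv u' w.
Proof. by rewrite dotvDl dotvNl. Qed.

Lemma dotvDr (R : realType) (d : nat) (u w w' : 'rV[R]_d) :
  dotv u (w + w') = dotv u w + dotv u w'.
Proof. by rewrite dotvC dotvDl !(dotvC _ u). Qed.

Lemma dotvZr (R : realType) (d : nat) k (u w : 'rV[R]_d) :
  dotv u (k *: w) = k * dotv u w.
Proof. by rewrite dotvC dotvZl dotvC. Qed.

Lemma dotvBr (R : realType) (d : nat) (u w w' : 'rV[R]_d) :
  dotv u (w - w') = dotv u w - dotv u w'.
Proof. by rewrite dotvC dotvBl !(dotvC _ u). Qed.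

Lemma dotv_ge0 (R : realType) (d : nat) (u : 'rV[R]_d) : 0 <= dotv u u.
Proof. by rewrite dotvE; apply: sumr_ge0 => i _; rewrite -expr2 sqr_ge0. Qed.

Lemma dotv_eq0 (R : realType) (d : nat) (u : 'rV[R]_d) : (dotv u u == 0) = (u == 0).
Proof.
apply/idP/idP; last by move/eqP->; rewrite dotvE big1 // => i _; rewrite mxE mulr0.
rewrite dotvE psumr_eq0; last by move=> i _; rewrite -expr2 sqr_ge0.
move/allP=> H; apply/eqP/rowP=> i; rewrite mxE.
by have /implyP/(_ isT) := H i (mem_index_enum i); rewrite mulf_eq0 orbb => /eqP.
Qed.

Lemma dotv_gt0 (R : realType) (d : nat) (u : 'rV[R]_d) : u != 0 -> 0 < dotv u u.
Proof. by move=> nz; rewrite lt_def dotv_eq0 nz dotv_ge0. Qed.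

Lemma dotv_mulmx (R : realType) (d : nat) (u w : 'rV[R]_d) (M : 'M[R]_d) :
  dotv (u *m M) w = dotv u (w *m M^T).
Proof. by rewrite /dotv trmx_mul trmxK mulmxA. Qed.

Lemma refl_tr (R : realType) (d : nat) (a : 'rV[R]_d) : (refl a)^T = refl a.
Proof. by rewrite /refl linearB /= linearZ /= trmx_mul trmxK trmx1. Qed.

Lemma reflE (R : realType) (d : nat) (a u : 'rV[R]_d) :
  u *m refl a = u - (2 * dotv u a / dotv a a) *: a.
Proof.
rewrite /refl mulmxBr mulmx1 -scalemxAr mulmxA.
have -> : u *m a^T = (dotv u a)%:M by apply/matrixP=> i j; rewrite !ord1 [RHS]mxE eqxx mulr1n.
rewrite mul_scalar_mx scalerA. congr (_ - _ *: _). by rewrite mulrAC.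
Qed.


Lemma mx_rowE (R : realType) (d : nat) (A B : 'M[R]_d) :
  (forall u : 'rV[R]_d, u *m A = u *m B) -> A = B.
Proof.
move=> H; apply/row_matrixP=> i.
by rewrite -[A]mul1mx -[B]mul1mx !row_mul H.
Qed.

Lemma refl_invol (R : realType) (d : nat) (a : 'rV[R]_d) :
  a != 0 -> refl a *m refl a = 1%:M.
Proof.
move=> nz; have pa := dotv_gt0 nz.
apply: mx_rowE => u; rewrite mulmx1 mulmxA !reflE dotvBl dotvZl.
set c := 2 * dotv u a / dotv a a.
have -> : 2 * (dotv u a - c * dotv a a) / dotv a a = - c.
  rewrite /c; field; lra.
by rewrite scaleNr opprK subrK.
Qed.

Lemma invmx_refl (R : realType) (d : nat) (a : 'rV[R]_d) :
  a != 0 -> invmx (refl a) = refl a.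
Proof.
move=> nz; have H := refl_invol nz.
have [U _] := mulmx1_unit H.
by rewrite -[LHS]mul1mx -H -mulmxA mulmxV // mulmx1.
Qed.

Lemma dotv_refl (R : realType) (d : nat) (b u w : 'rV[R]_d) :
  b != 0 -> dotv (u *m refl b) (w *m refl b) = dotv u w.
Proof. by move=> nz; rewrite dotv_mulmx refl_tr -mulmxA refl_invol // mulmx1. Qed.

Lemma dotv_reflr (R : realType) (d : nat) (b u w : 'rV[R]_d) :
  dotv u (w *m refl b) = dotv (u *m refl b) w.
Proof. by rewrite dotv_mulmx refl_tr. Qed.

Lemma refl_conj (R : realType) (d : nat) (a b : 'rV[R]_d) :
  b != 0 -> refl b *m refl a *m refl b = refl (a *m refl b).
Proof.
move=> nz; apply: mx_rowE => u.
rewrite !mulmxA. rewrite [u *m _ *m refl a]reflE mulmxBl -scalemxAl -mulmxA refl_invol // mulmx1.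
by rewrite [in RHS]reflE dotv_refl // dotv_reflr.
Qed.

Lemma reflZ (R : realType) (d : nat) (k : R) (a : 'rV[R]_d) :
  k != 0 -> a != 0 -> refl (k *: a) = refl a.
Proof.
move=> kz nz; have pa := dotv_gt0 nz.
apply: mx_rowE => u; rewrite !reflE dotvZr dotvZl dotvZr scalerA.
congr (_ - _ *: _); field; apply/andP; split=> //; lra.
Qed.

Lemma cs_strict (R : realType) (d : nat) (a b : 'rV[R]_d) :
  a != 0 -> b != 0 -> refl a != refl b -> dotv a b ^+ 2 < dotv a a * dotv b b.
Proof.
move=> na nb nab; have pa := dotv_gt0 na; have pb := dotv_gt0 nb.
rewrite ltNge; apply/negP=> H.
pose g := dotv a a *: b - dotv a b *: a.
have Eg : dotv g g = dotv a a * (dotv a a * dotv b b - dotv a b ^+ 2).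
  rewrite /g !dotvBl !dotvBr !dotvZl !dotvZr (dotvC b a); ring.
have g0 : g = 0.
  apply/eqP; rewrite -dotv_eq0 eq_le dotv_ge0 andbT Eg.
  by rewrite pmulr_rle0 // subr_le0.
have Eb : b = (dotv a b / dotv a a) *: a.
  apply: (scalerI (lt0r_neq0 pa)); rewrite scalerA mulrC divfK ?lt0r_neq0 //.
  by apply/eqP; rewrite -subr_eq0 -/g g0.
have nz : dotv a b / dotv a a != 0.
  apply: contra nb => /eqP z; by rewrite Eb z scale0r.
by move: nab; rewrite Eb reflZ // eqxx.
Qed.

Lemma key_real (R : realType) (p q U V N : R) :
  0 < p -> 0 < q -> p + q <= U -> p + q <= V -> U * V = N * p * q -> N < 4 -> False.
Proof.
move=> hp hq hU hV E hN.
have h1 : (p + q) * (p + q) <= U * V.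
  apply: ler_pM; lra.
have h2 : 4 * p * q <= (p + q) * (p + q).
  rewrite -subr_ge0 (_ : _ - _ = (p - q) ^+ 2) ?sqr_ge0 //; ring.
have h3 : N * p * q < 4 * p * q.
  by rewrite -!mulrA ltr_pM2r // mulr_gt0.
lra.
Qed.

Lemma improve (R : realType) (d : nat) (q v a b : 'rV[R]_d) :
  a != 0 -> b != 0 -> refl a != refl b ->
  dotv (q *m refl a) v < dotv q v ->
  dotv (q *m refl a) v < dotv (q *m refl a *m refl b) v ->
  dotv (q *m refl a) v < dotv (q *m refl b) v \/
  dotv (q *m refl a) v < dotv (q *m refl a *m refl b *m refl a) v.
Proof.
move=> na nb nab H1 H2.
have pa := dotv_gt0 na; have pb := dotv_gt0 nb; have cs := cs_strict na nb nab.
set A := dotv a a in pa cs *; set B := dotv b b in pb cs *.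
set g := dotv a b in cs *.
set Qa := dotv q a; set Qb := dotv q b; set X := dotv a v; set Y := dotv b v.
set F := dotv q v in H1 *.
pose a1 := 2 * Qa / A; pose c1 := 2 * (Qb - a1 * g) / B.
pose n1 := 2 * g / B; pose n := 2 * g / A.
have E1 : dotv (q *m refl a) v = F - a1 * X.
  by rewrite reflE dotvBl dotvZl.
have E12 : dotv (q *m refl a *m refl b) v = F - a1 * X - c1 * Y.
  by rewrite reflE dotvBl dotvZl E1 reflE dotvBl dotvZl.
have E2 : dotv (q *m refl b) v = F - 2 * Qb / B * Y.
  by rewrite reflE dotvBl dotvZl.
have E121 : dotv (q *m refl a *m refl b *m refl a) v = F - a1 * X - c1 * Y + (a1 + c1 * n) * X.
  rewrite [X in dotv X v]reflE dotvBl dotvZl E12 [X in dotv X a]reflE dotvBl dotvZl.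
  rewrite reflE dotvBl dotvZl (dotvC b a) -/Qa -/A -/g -/a1 -/c1.
  rewrite dotvBl dotvZl -/Qb -/B -/X /n /c1 /a1 /g /Qa /Qb /A /B /X /Y /F.
  by field; rewrite !lt0r_neq0.
rewrite E1 in H1 H2 *; rewrite E12 in H2; rewrite E2 E121.
case: (ltP (F - a1 * X) (F - 2 * Qb / B * Y)) => [|H3]; first by left.
case: (ltP (F - a1 * X) (F - a1 * X - c1 * Y + (a1 + c1 * n) * X)) => [|H4]; first by right.
exfalso.
pose p := a1 * X; pose qq := - (c1 * Y).
pose U := a1 * n1 * Y; pose V := - (c1 * n * X).
pose N := n * n1.
have hc1 : 2 * Qb / B = c1 + a1 * n1.
  by rewrite /c1 /n1 /a1 /Qb /Qa /B /A /g; field; rewrite !lt0r_neq0.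
apply: (@key_real R p qq U V N).
- rewrite /p; lra.
- rewrite /qq; lra.
- rewrite /U /p /qq; rewrite hc1 in H3; lra.
- rewrite /V /p /qq; lra.
- rewrite /U /V /N /p /qq; ring.
- rewrite /N /n /n1.
  have -> : 2 * g / A * (2 * g / B) = 4 * (g ^+ 2 / (A * B)) by field; lra.
  have : g ^+ 2 / (A * B) < 1 by rewrite ltr_pdivrMr ?mulr_gt0 // mul1r.
  lra.
Qed.



Lemma be_refl (R : realType) (d : nat) (s : seq 'M[R]_d) : braid_equiv s s.
Proof. exact: rt_refl. Qed.

Lemma be_trans (R : realType) (d : nat) (s1 s2 s3 : seq 'M[R]_d) :
  braid_equiv s1 s2 -> braid_equiv s2 s3 -> braid_equiv s1 s3.
Proof. exact: rt_trans. Qed.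

Lemma be_step (R : realType) (d : nat) (s1 s2 : seq 'M[R]_d) :
  braid_step s1 s2 -> braid_equiv s1 s2.
Proof. exact: rt_step. Qed.

Lemma bs_lift (R : realType) (d : nat) (l r s s' : seq 'M[R]_d) :
  braid_step s s' -> braid_step (l ++ s ++ r) (l ++ s' ++ r).
Proof.
move=> [l0 [r0 [x [y [-> H]]]]].
exists (l ++ l0), (r0 ++ r), x, y; split; first by rewrite -!catA.
by case: H => ->; [left|right]; rewrite -!catA.
Qed.

Lemma be_lift (R : realType) (d : nat) (l r s s' : seq 'M[R]_d) :
  braid_equiv s s' -> braid_equiv (l ++ s ++ r) (l ++ s' ++ r).
Proof.
elim=> [a b H|a|a b c _ IH1 _ IH2].
- exact/be_step/bs_lift.
- exact: be_refl.
- exact: be_trans IH1 IH2.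
Qed.

Lemma prodmx_cat (R : realType) (d : nat) (l m : seq 'M[R]_d) :
  prodmx (l ++ m) = prodmx l *m prodmx m.
Proof. by elim: l => [|x l IH] /=; rewrite ?mul1mx // IH mulmxA. Qed.

Fixpoint pot (R : realType) (d : nat) (v p : 'rV[R]_d) (s : seq 'M[R]_d) : R :=
  if s is t :: s' then dotv (p *m t) v + pot v (p *m t) s' else 0.

Lemma pot_cat (R : realType) (d : nat) (v p : 'rV[R]_d) (l m : seq 'M[R]_d) :
  pot v p (l ++ m) = pot v p l + pot v (p *m prodmx l) m.
Proof.
elim: l p => [|x l IH] p /=; first by rewrite add0r mulmx1.
by rewrite IH addrA mulmxA.
Qed.

Lemma pot_swap (R : realType) (d : nat) (v p : 'rV[R]_d) (l r : seq 'M[R]_d) x y x' y' :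
  x' *m y' = x *m y ->
  pot v p (l ++ x' :: y' :: r) - pot v p (l ++ x :: y :: r) =
  dotv (p *m prodmx l *m x') v - dotv (p *m prodmx l *m x) v.
Proof.
move=> E; rewrite !pot_cat /= -!mulmxA E; ring.
Qed.



Definition gen (R : realType) (d : nat) (Rs : seq 'rV[R]_d) (p : 'rV[R]_d) :=
  forall b, b \in Rs -> dotv p b != 0.

Lemma refl_root_nz (R : realType) (d : nat) (Rs : seq 'rV[R]_d) a :
  reduced_root_system Rs -> a \in Rs -> a != 0.
Proof. by case=> H0 _ _ _ _ aR; apply: contraNneq H0 => <-. Qed.

Lemma gen_refl (R : realType) (d : nat) (Rs : seq 'rV[R]_d) p t :
  reduced_root_system Rs -> gen Rs p -> is_reflection Rs t -> gen Rs (p *m t).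
Proof.
move=> RS g [a aR ->] b bR.
have [_ _ st _ _] := RS.
by rewrite -dotv_reflr; apply: g; apply: st.
Qed.

Lemma gen_step (R : realType) (d : nat) (Rs : seq 'rV[R]_d) v p t :
  reduced_root_system Rs -> gen Rs v -> gen Rs p -> is_reflection Rs t ->
  dotv (p *m t) v != dotv p v.
Proof.
move=> RS gv gp [a aR ->].
have pa := dotv_gt0 (refl_root_nz RS aR).
rewrite reflE dotvBl dotvZl -subr_eq0 (_ : _ - _ = - (2 * dotv p a / dotv a a * dotv a v)); last by ring.
rewrite oppr_eq0 !mulf_neq0 ?invr_neq0 ?(lt0r_neq0 pa) ?pnatr_eq0 //; first by apply: gp.
by rewrite dotvC; apply: gv.
Qed.

Lemma first_ascent (R : realType) (d : nat) (Rs : seq 'rV[R]_d) v :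
  reduced_root_system Rs -> gen Rs v ->
  forall s t q, (forall x, x \in t :: s -> is_reflection Rs x) -> gen Rs q ->
  dotv (q *m t) v < dotv q v -> dotv q v <= dotv (q *m prodmx (t :: s)) v ->
  exists l x y r, t :: s = l ++ x :: y :: r /\
    dotv (q *m prodmx l *m x) v < dotv (q *m prodmx l) v /\
    dotv (q *m prodmx l *m x) v < dotv (q *m prodmx l *m x *m y) v.
Proof.
move=> RS gv; elim=> [|t' s IH] t q Hr gq H1 H2.
  move: H2; rewrite /prodmx /= mulmx1 => H2.
  by have := lt_le_trans H1 H2; rewrite ltxx.
have [H3|H3] := ltP (dotv (q *m t) v) (dotv (q *m t *m t') v).
  by exists [::], t, t', s; rewrite /= mulmx1.
have Rt : is_reflection Rs t by apply: Hr; rewrite mem_head.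
have Rt' : is_reflection Rs t' by apply: Hr; rewrite !inE eqxx orbT.
have gqt := gen_refl RS gq Rt.
have H4 : dotv (q *m t *m t') v < dotv (q *m t) v.
  by rewrite lt_neqAle H3 andbT (gen_step RS gv gqt Rt').
have Hr' : forall x, x \in t' :: s -> is_reflection Rs x.
  by move=> z zi; apply: Hr; rewrite inE zi orbT.
have H2' : dotv (q *m t) v <= dotv (q *m t *m prodmx (t' :: s)) v.
  move: H2; rewrite -mulmxA /prodmx /= => H2; lra.
have [l [x [y [r [E [F1 F2]]]]]] := IH t' (q *m t) Hr' gqt H4 H2'.
exists (t :: l), x, y, r; rewrite /= E; split=> //.
by rewrite !mulmxA.
Qed.

Lemma conj_refl (R : realType) (d : nat) (Rs : seq 'rV[R]_d) x y :
  reduced_root_system Rs -> is_reflection Rs x -> is_reflection Rs y ->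
  is_reflection Rs (x *m y *m invmx x).
Proof.
move=> RS [a aR ->] [b bR ->]; have [_ _ st _ _] := RS.
rewrite invmx_refl ?(refl_root_nz RS aR) // refl_conj ?(refl_root_nz RS aR) //.
by exists (b *m refl a) => //; apply: st.
Qed.

Lemma refl_sq (R : realType) (d : nat) (Rs : seq 'rV[R]_d) x :
  reduced_root_system Rs -> is_reflection Rs x -> x *m x = 1%:M.
Proof. by move=> RS [a aR ->]; rewrite refl_invol ?(refl_root_nz RS aR). Qed.

Lemma refl_inv (R : realType) (d : nat) (Rs : seq 'rV[R]_d) x :
  reduced_root_system Rs -> is_reflection Rs x -> invmx x = x.
Proof. by move=> RS [a aR ->]; rewrite invmx_refl ?(refl_root_nz RS aR). Qed.

Lemma step_improve (R : realType) (d : nat) (Rs : seq 'rV[R]_d) v t s :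
  reduced_root_system Rs -> gen Rs v ->
  (forall x, x \in t :: s -> is_reflection Rs x) -> prodmx (t :: s) = 1%:M ->
  (forall l u w r, t :: s = l ++ u :: w :: r -> u != w) ->
  exists ts', [/\ braid_step (t :: s) ts',
    (forall x, x \in ts' -> is_reflection Rs x), prodmx ts' = 1%:M,
    size ts' = size (t :: s) & pot v v (t :: s) < pot v v ts'].
Proof.
move=> RS gv Hr Hp Hna.
have Rt : is_reflection Rs t by apply: Hr; rewrite mem_head.
have H1 : dotv (v *m t) v < dotv v v.
  case: Rt => a aR ->.
  have pa := dotv_gt0 (refl_root_nz RS aR).
  have va : dotv v a != 0 by apply: gv.
  rewrite reflE dotvBl dotvZl (dotvC a v).
  have sq : 0 < dotv v a ^+ 2 by rewrite lt_def sqr_ge0 andbT sqrf_eq0.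
  have -> : 2 * dotv v a / dotv a a * dotv v a = 2 * dotv v a ^+ 2 / dotv a a.
    by rewrite expr2; field; rewrite lt0r_neq0.
  have : 0 < 2 * dotv v a ^+ 2 / dotv a a by rewrite divr_gt0 // mulr_gt0.
  lra.
have H2 : dotv v v <= dotv (v *m prodmx (t :: s)) v by rewrite Hp mulmx1.
have [l [x [y [r [E [F1 F2]]]]]] := first_ascent RS gv Hr gv H1 H2.
have Hr2 : forall z, z \in l ++ x :: y :: r -> is_reflection Rs z by rewrite -E.
have Rx : is_reflection Rs x by apply: Hr2; rewrite mem_cat !inE eqxx orbT.
have Ry : is_reflection Rs y by apply: Hr2; rewrite mem_cat !inE eqxx !orbT.
have nxy := Hna _ _ _ _ E.
have Hmem : forall x' y' z, z \in l ++ x' :: y' :: r ->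
    z \in l ++ x :: y :: r \/ z = x' \/ z = y'.
  move=> x' y' z; rewrite !mem_cat !inE => /orP[->|]; first by left.
  case/orP=> [/eqP->|]; first by right; left.
  case/orP=> [/eqP->|->]; first by right; right.
  by left; rewrite !orbT.
have Hprod : forall x' y', x' *m y' = x *m y ->
    prodmx (l ++ x' :: y' :: r) = 1%:M.
  move=> x' y' Ex; rewrite -Hp E !prodmx_cat /prodmx /= !mulmxA.
  by rewrite -(mulmxA _ x') Ex mulmxA.
move: (Rx) (Ry) => [a aR Ea] [b bR Eb].
have na := refl_root_nz RS aR; have nb := refl_root_nz RS bR.
set q := v *m prodmx l in F1 F2.
have nab : refl a != refl b by rewrite -Ea -Eb.
rewrite Ea Eb in F1 F2.
have [G|G] := improve na nb nab F1 F2.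
- exists (l ++ y :: (invmx y *m x *m y) :: r); split.
  + by rewrite E; exists l, r, x, y; split=> //; right.
  + move=> z /Hmem [|[->|->]]; [by rewrite -E; apply: Hr| exact: Ry|].
    by have := conj_refl RS Ry Rx; rewrite !(refl_inv RS Ry).
  + apply: Hprod; by rewrite !mulmxA (refl_inv RS Ry) (refl_sq RS Ry) mul1mx.
  + by rewrite E !size_cat.
  + rewrite E -subr_gt0 pot_swap; last first.
      by rewrite !mulmxA (refl_inv RS Ry) (refl_sq RS Ry) mul1mx.
    by rewrite subr_gt0 -/q Ea Eb.
- exists (l ++ (x *m y *m invmx x) :: x :: r); split.
  + by rewrite E; exists l, r, x, y; split=> //; left.
  + move=> z /Hmem [|[->|->]]; [by rewrite -E; apply: Hr| |exact: Rx].
    exact: conj_refl.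
  + apply: Hprod; by rewrite -mulmxA (refl_inv RS Rx) (refl_sq RS Rx) mulmx1.
  + by rewrite E !size_cat.
  + rewrite E -subr_gt0 pot_swap; last first.
      by rewrite -mulmxA (refl_inv RS Rx) (refl_sq RS Rx) mulmx1.
    by rewrite subr_gt0 -/q (refl_inv RS Rx) Ea Eb !mulmxA.
Qed.



Fixpoint tups (T : Type) (L : seq T) (n : nat) : seq (seq T) :=
  if n is n'.+1 then [seq x :: s | x <- L, s <- tups L n'] else [:: [::]].

Lemma mem_tups (T : eqType) (L s : seq T) :
  (forall x, x \in s -> x \in L) -> s \in tups L (size s).
Proof.
elim: s => [|x s IH] H /=; first by rewrite inE.
apply: allpairs_f; first by apply: H; rewrite mem_head.
by apply: IH => y ys; apply: H; rewrite inE ys orbT.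
Qed.

Lemma count_lt (T : eqType) (a1 a2 : pred T) (s : seq T) x :
  (forall y, a1 y -> a2 y) -> x \in s -> a2 x -> ~~ a1 x ->
  (count a1 s < count a2 s)%N.
Proof.
move=> sub; elim: s => [|y s IH] //= xs h2 h1.
have le : (count a1 s <= count a2 s)%N.
  by apply: sub_count => z; apply: sub.
move: xs; rewrite inE => /orP[/eqP <-|xs].
  by rewrite (negbTE h1) h2 add0n add1n ltnS.
have hy : (a1 y <= a2 y)%N by case: (a1 y) (sub y) => // ->.
by rewrite -addnS leq_add // IH.
Qed.

Lemma adjacency (R : realType) (d : nat) (Rs : seq 'rV[R]_d) v :
  reduced_root_system Rs -> gen Rs v ->
  forall ts : seq 'M[R]_d, ts != [::] ->
  (forall x, x \in ts -> is_reflection Rs x) -> prodmx ts = 1%:M ->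
  exists ts' l u r, [/\ braid_equiv ts ts',
    (forall x, x \in ts' -> is_reflection Rs x), prodmx ts' = 1%:M,
    size ts' = size ts & ts' = l ++ u :: u :: r].
Proof.
move=> RS gv.
pose L := [seq refl a | a <- Rs].
have inL : forall x, is_reflection Rs x -> x \in L.
  by move=> x [a aR ->]; apply: map_f.
pose mu (ts : seq 'M[R]_d) :=
  count (fun s => pot v v ts < pot v v s) (tups L (size ts)).
suff : forall m ts, (mu ts < m)%N -> ts != [::] ->
  (forall x, x \in ts -> is_reflection Rs x) -> prodmx ts = 1%:M ->
  exists ts' l u r, [/\ braid_equiv ts ts',
    (forall x, x \in ts' -> is_reflection Rs x), prodmx ts' = 1%:M,
    size ts' = size ts & ts' = l ++ u :: u :: r].
  by move=> H ts; apply: (H (mu ts).+1).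
elim=> [|m IH] ts // Hm Hne Hr Hp.
case: (classic (exists l u r, ts = l ++ u :: u :: r)) => [[l [u [r E]]]|NE].
  by exists ts, l, u, r; split=> //; apply: be_refl.
case: ts Hm Hne Hr Hp NE => [|t s] // Hm _ Hr Hp NE.
have Hna : forall l u w r, t :: s = l ++ u :: w :: r -> u != w.
  move=> l u w r E; apply/negP => /eqP Euw; apply: NE.
  by exists l, u, r; rewrite E Euw.
have [ts1 [S1 R1 P1 Z1 L1]] := step_improve RS gv Hr Hp Hna.
have Hm1 : (mu ts1 < m)%N.
  rewrite -ltnS; apply: leq_trans Hm.
  rewrite /mu Z1; apply: (count_lt (x := ts1)).
  - by move=> y /= H; apply: lt_trans H.
  - by rewrite -Z1; apply: mem_tups => x xi; apply: inL; apply: R1.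
  - by [].
  - by rewrite /= ltxx.
have Hne1 : ts1 != [::] by rewrite -size_eq0 Z1.
have [ts' [l [u [r [S' R' P' Z' E']]]]] := IH ts1 Hm1 Hne1 R1 P1.
exists ts', l, u, r; split=> //; last by rewrite Z' Z1.
exact: be_trans (be_step S1) S'.
Qed.



Lemma le_sum_mem (R : realType) (T : eqType) (F : T -> R) (L : seq T) x :
  (forall y, 0 <= F y) -> x \in L -> F x <= \sum_(y <- L) F y.
Proof.
move=> F0; elim: L => [|z L IH] //; rewrite big_cons inE => /orP[/eqP->|xL].
  by rewrite lerDl sumr_ge0.
by apply: le_trans (IH xL) _; rewrite lerDr.
Qed.

Lemma exists_gen (R : realType) (d : nat) (L : seq 'rV[R]_d) :
  0 \notin L -> exists v, forall b, b \in L -> dotv v b != 0.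
Proof.
elim: L => [|b L IH]; first by exists 0.
rewrite inE negb_or => /andP[nb nL].
have [v Hv] := IH nL.
have [vb|vb] := eqVneq (dotv v b) 0; last first.
  by exists v => c; rewrite inE => /orP[/eqP->|cL] //; apply: Hv.
pose S := \sum_(c <- L) `|dotv b c| / `|dotv v c|.
have S0 : 0 <= S by apply: sumr_ge0 => c _; rewrite divr_ge0.
pose e := 1 / (1 + S).
have e0 : 0 < e by rewrite divr_gt0 //; lra.
have eS : e * S < 1.
  by rewrite /e mul1r ltr_pdivrMl ?mulr1; lra.
exists (v + e *: b) => c; rewrite inE => /orP[/eqP->|cL].
  rewrite dotvDl dotvZl vb add0r mulf_neq0 ?lt0r_neq0 //.
  by rewrite dotv_gt0 // eq_sym.
have vc := Hv c cL.
have pvc : 0 < `|dotv v c| by rewrite normr_gt0.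
have le1 : `|dotv b c| / `|dotv v c| <= S.
  have := @le_sum_mem R _ (fun c => `|dotv b c| / `|dotv v c|) L c _ cL; apply.
  by move=> y; rewrite divr_ge0.
have le2 : `|dotv b c| <= S * `|dotv v c|.
  by rewrite -ler_pdivrMr.
have lt3 : e * `|dotv b c| < `|dotv v c|.
  apply: le_lt_trans (_ : e * (S * `|dotv v c|) < _).
    by rewrite ler_pM2l.
  by rewrite mulrA gtr_pMl.
rewrite dotvDl dotvZl; apply/eqP => E.
have : `|dotv v c| = `|e * dotv b c|.
  by rewrite -normrN; congr `|_|; lra.
rewrite normrM gtr0_norm // => E2; lra.
Qed.



Lemma be_prefix (R : realType) (d : nat) (l s s' : seq 'M[R]_d) :
  braid_equiv s s' -> braid_equiv (l ++ s) (l ++ s').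
Proof. by move=> H; have := be_lift l [::] H; rewrite !cats0. Qed.

Lemma move_front (R : realType) (d : nat) (Rs : seq 'rV[R]_d) :
  reduced_root_system Rs ->
  forall (l : seq 'M[R]_d) u r, (forall x, x \in l -> is_reflection Rs x) ->
  is_reflection Rs u ->
  exists u', is_reflection Rs u' /\
    braid_equiv (l ++ u :: u :: r) (u' :: u' :: l ++ r).
Proof.
move=> RS; elim=> [|x l IH] u r Hl Hu; first by exists u; split=> //; apply: be_refl.
have Rx : is_reflection Rs x by apply: Hl; rewrite mem_head.
have [u0 [Ru0 E0]] := IH u r (fun y yl => Hl y (@mem_behead _ (x :: l) y yl)) Hu.
exists (x *m u0 *m invmx x); split; first exact: conj_refl.
apply: be_trans (be_prefix [:: x] E0) _.
apply: be_trans (be_step (_ : braid_step _ (x *m u0 *m invmx x :: x :: u0 :: l ++ r))) _.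
  by exists [::], (u0 :: l ++ r), x, u0; split=> //; left.
apply: be_step.
by exists [:: x *m u0 *m invmx x], (l ++ r), x, u0; split=> //; left.
Qed.

Lemma main_ind (R : realType) (d : nat) (Rs : seq 'rV[R]_d) v :
  reduced_root_system Rs -> gen Rs v ->
  forall n (ts : seq 'M[R]_d), size ts = n ->
  (forall x, x \in ts -> is_reflection Rs x) -> prodmx ts = 1%:M ->
  ~~ odd n /\ exists ts' : seq 'M[R]_d,
    [/\ braid_equiv ts ts', size ts' = n,
        (forall t, t \in ts' -> is_reflection Rs t), prodmx ts' = 1%:M &
        (forall i, (i < n %/ 2)%N -> nth 0 ts' i.*2 = nth 0 ts' i.*2.+1)].
Proof.
move=> RS gv; elim/ltn_ind=> n IH ts Sz Hr Hp.
case: n IH Sz => [|n] IH Sz.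
  split=> //; exists ts; split=> //; exact: be_refl.
have Hne : ts != [::] by rewrite -size_eq0 Sz.
have [ts1 [l [u [r [E1 R1 P1 Z1 Et]]]]] := adjacency RS gv Hne Hr Hp.
subst ts1.
have Ru : is_reflection Rs u by apply: R1; rewrite mem_cat mem_head orbT.
have Rl : forall x, x \in l -> is_reflection Rs x.
  by move=> x xl; apply: R1; rewrite mem_cat xl.
have [u' [Ru' E2]] := move_front RS r Rl Ru.
have Zs : (size l + size r).+2 = n.+1.
  by move: Z1; rewrite Sz size_cat /= !addnS.
have nn : n = n.-1.+1 by case: Zs => <-.
have Sz2 : size (l ++ r) = n.-1 by rewrite size_cat; case: Zs => <-.
have P2 : prodmx (l ++ r) = 1%:M.
  move: P1; rewrite !prodmx_cat.
  by rewrite /prodmx /= -/(prodmx r) (mulmxA u) (refl_sq RS Ru) mul1mx.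
have R2 : forall x, x \in l ++ r -> is_reflection Rs x.
  move=> x; rewrite mem_cat => /orP[xl|xr]; first exact: Rl.
  by apply: R1; rewrite mem_cat !inE xr !orbT.
have lt : (n.-1 < n.+1)%N by rewrite nn ltnS leqnSn.
have [odd2 [ts3 [E3 Z3 R3 P3 Q3]]] := IH _ lt _ Sz2 R2 P2.
split; first by rewrite nn /= negbK.
exists (u' :: u' :: ts3); split.
- apply: be_trans E1 _; apply: be_trans E2 _.
  exact: (be_prefix [:: u'; u'] E3).
- by rewrite /= Z3 -nn.
- by move=> t; rewrite !inE => /orP[/eqP->|/orP[/eqP->|]] //; apply: R3.
- by rewrite /prodmx /= -/(prodmx ts3) P3 mulmx1 (refl_sq RS Ru').
- case=> [|i] // Hi /=; apply: Q3.
  have e : forall m, (m.+2 %/ 2 = (m %/ 2).+1)%N.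
    by move=> m; rewrite -addn2 divnDr // divnn addn1.
  by move: Hi; rewrite {1}nn e ltnS.
Qed.

Unset Implicit Arguments.
Theorem proposition2p3 (R : realType) (d : nat) (Rs : seq 'rV[R]_d)
  (ts : seq 'M[R]_d) :
  reduced_root_system Rs ->
  (forall t, t \in ts -> is_reflection Rs t) ->
  prodmx ts = 1%:M ->
  ~~ odd (size ts) /\
  exists ts' : seq 'M[R]_d,
    [/\ braid_equiv ts ts',
        size ts' = size ts,
        (forall t, t \in ts' -> is_reflection Rs t),
        prodmx ts' = 1%:M &
        (forall i, (i < (size ts) %/ 2)%N ->
           nth 0 ts' i.*2 = nth 0 ts' i.*2.+1)].
Proof.
move=> RS Hr Hp.
have [H0 _ _ _ _] := RS.
have [v gv] := exists_gen H0.
exact: (main_ind RS gv (erefl (size ts)) Hr Hp).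
Qed.
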